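(* Let $m\ge3$, $\mu\ge0$, $c\in\mathbb{R}^m_{\ge0}$, demands $d=(d_L,d_R)$ with $d_L\in\Delta^L$, $d_R\in\Delta^R$, and $C:=2(\|c\|_\infty+33\mu\log m)$, and assume $C>0$. Let $\Delta\ge0$ and let $x\in\Delta^m$ satisfy $$F(x)\le\min_{x'\in\Delta^m}F(x')+\frac{\Delta}{4C},\qquad F(x):=\frac1{4C}\langle c,x\rangle+\frac{\mu}{4C}H(x)+\frac14\|\mathbf{B}^\top x-d\|_1.$$ Let $\tilde x\in\Delta^m$ satisfy $\mathbf{B}^\top\tilde x=d$ and $\|\tilde x-x\|_1\le2\|\mathbf{B}^\top x-d\|_1$ (e.g. the output of the $\mathsf{OTRound}$ procedure of Altschuler–Weed–Rigollet applied to $x$). Then $$\langle c,\tilde x\rangle+\mu H(\tilde x)\le\mathrm{OPT}_\mu(d)+\Delta+\mu m^{-30}.$$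
   Context: $L,R$ are finite nonempty sets, $m=|L||R|$, and coordinates of $\mathbb{R}^m$ are indexed by pairs $(i,j)\in L\times R$. $\mathbf{B}\in\{0,1\}^{m\times(|L|+|R|)}$ is the unsigned edge-vertex incidence matrix of the complete bipartite graph on $L\cup R$: $\mathbf{B}_{(i,j),v}=1$ iff $v\in\{i,j\}$. $H(x)=\sum_i x_i\log x_i$ ($0\log0=0$, natural log). $\mathrm{OPT}_\mu(d)=\min_{x\in\Delta^m,\ \mathbf{B}^\top x=d}\ \langle c,x\rangle+\mu H(x)$. $\Delta^k$ denotes the probability simplex. *)

(* Defs.v *)
From HB Require Import structures.
From mathcomp Require Import all_boot all_order all_algebra.
From mathcomp Require Import all_classical all_reals all_analysis.
Set Implicit Arguments. Unset Strict Implicit. Unset Printing Implicit Defensive.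
Import Order.TTheory GRing.Theory Num.Theory.
Local Open Scope ring_scope.
Local Open Scope classical_set_scope.

Section Defs.
Variable R : realType.

Definition simplex (T : finType) (x : T -> R) : Prop :=
  (forall t, 0 <= x t) /\ \sum_(t : T) x t = 1.

Definition negent (T : finType) (x : T -> R) : R :=
  \sum_(t : T) (if x t == 0 then 0 else x t * ln (x t)).

Definition inner (T : finType) (c x : T -> R) : R := \sum_(t : T) c t * x t.

Definition norm1 (T : finType) (x : T -> R) : R := \sum_(t : T) `|x t|.

Definition norminf (T : finType) (x : T -> R) : R := \big[Num.max/0]_(t : T) `|x t|.

(* B^T x for the unsigned incidence matrix of the complete bipartite graph on
   L ∪ R (vertices indexed by the disjoint sum L + Rv):
   (B^T x)_v = sum of x_e over edges e incident to v. *)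
Definition BT (L Rv : finType) (x : L * Rv -> R) : L + Rv -> R :=
  fun v => \sum_(e : L * Rv) (if (v == inl e.1) || (v == inr e.2) then x e else 0).

Definition demand (L Rv : finType) (dL : L -> R) (dR : Rv -> R) : L + Rv -> R :=
  fun v => match v with inl i => dL i | inr j => dR j end.

Definition OPT (L Rv : finType) (c : L * Rv -> R) (mu : R) (d : L + Rv -> R) : R :=
  inf [set inner c x + mu * negent x | x in
        [set x : L * Rv -> R | simplex x /\ BT x = d]].

Definition Fobj (L Rv : finType) (c : L * Rv -> R) (mu C : R) (d : L + Rv -> R)
  (x : L * Rv -> R) : R :=
  (4 * C)^-1 * inner c x + mu / (4 * C) * negent x + 4^-1 * norm1 (fun v => BT x v - d v).

End Defs.

(* Main.v *)
Require Import Defs.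
From HB Require Import structures.
From mathcomp Require Import all_boot all_order all_algebra.
From mathcomp Require Import all_classical all_reals all_analysis.
From mathcomp Require Import ring lra.
Import Order.TTheory GRing.Theory Num.Theory.
Local Open Scope ring_scope.
Local Open Scope classical_set_scope.

Section Helpers.
Variable R : realType.

Lemma ln_le_sub1 {x : R} : 0 < x -> ln x <= x - 1.
Proof.
move=> x0; have := @le_ln1Dx R (x - 1).
have -> : 1 + (x - 1) = x by rewrite addrC subrK.
apply; rewrite ltrBrDl; lra.
Qed.

Definition phi (t : R) := if t == 0 then 0 else t * ln t.

Lemma phi_ge (t : R) : 0 <= t -> -1 <= phi t.
Proof.
rewrite /phi; case: eqP => [_ _|/eqP t0 tge]; first by rewrite lerN10.
have tp : 0 < t by rewrite lt_def t0.
have tip : 0 < t^-1 by rewrite invr_gt0.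
have := ln_le_sub1 tip; rewrite lnV ?posrE // => h.
have h2 : t * (1 - t^-1) <= t * ln t.
  by rewrite ler_pM2l //; lra.
rewrite mulrBr mulr1 mulfV ?t0 // in h2.
lra.
Qed.

Lemma phi_diff (a b K : R) : 0 <= a <= 1 -> 0 <= b <= 1 -> 0 < K -> 1 <= - ln K ->
  phi b - phi a <= - ln K * `|b - a| + K.
Proof.
move=> /andP[a0 a1] /andP[b0 b1] K0 LK.
have LK0 : 0 <= - ln K by apply: le_trans LK.
case: (leP a b) => hab.
-
  rewrite ger0_norm ?subr_ge0 //.
  suff : phi b - phi a <= b - a.
    move=> h; apply: le_trans h _; apply: ler_wpDr; first exact: ltW.
    by rewrite -{1}(mul1r (b - a)) ler_wpM2r // subr_ge0.
  rewrite /phi; case: (eqVneq a 0) => [->|an0].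
  + rewrite ?eqxx ?subr0; case: eqP => _ //.
    apply: (@le_trans _ _ 0); last by [].
    by rewrite mulr_ge0_le0 // ln_le0.
  + have ap : 0 < a by rewrite lt_def an0.
    have bp : 0 < b by apply: lt_le_trans hab.
    rewrite (gt_eqF bp).
    have e : b * ln b - a * ln a = a * (ln b - ln a) + (b - a) * ln b by ring.
    rewrite e; apply: (@le_trans _ _ (b - a + 0)); last by rewrite addr0.
    apply: lerD.
    * rewrite -ln_div ?posrE //.
      have := ln_le_sub1 (divr_gt0 bp ap) => h.
      apply: le_trans (ler_wpM2l a0 h) _.
      by rewrite mulrBr mulr1 mulrCA mulfV ?an0 // mulr1.
    * by rewrite mulr_ge0_le0 ?subr_ge0 // ln_le0.
-
  set s := a - b.
  have sp : 0 < s by rewrite subr_gt0.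
  rewrite distrC ger0_norm; last exact: ltW.
  have ap : 0 < a by apply: le_lt_trans hab.
  have h1 : phi b - phi a <= - (s * ln s).
    rewrite /phi (gt_eqF ap); case: (eqVneq b 0) => [b00|bn0].
    + by rewrite /s b00 subr0 sub0r.
    + have bp : 0 < b by rewrite lt_def bn0.
      have ea : a = b + s by rewrite /s addrC subrK.
      have m1 : b * ln b <= b * ln a.
        by rewrite ler_pM2l // ler_ln ?posrE // ea lerDl ltW.
      have m2 : s * ln s <= s * ln a.
        by rewrite ler_pM2l // ler_ln ?posrE // ea lerDr ltW.
      have m3 : a * ln a = b * ln a + s * ln a by rewrite {1}ea mulrDl.
      lra.
  apply: le_trans h1 _.
  have h2 := ln_le_sub1 (divr_gt0 K0 sp).
  rewrite ln_div ?posrE // in h2.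
  have h3 := ler_wpM2l (ltW sp) h2.
  rewrite mulrBr mulrBr mulr1 mulrCA mulfV ?gt_eqF // mulr1 in h3.
  have h4 : s <= -ln K * s by rewrite -{1}(mul1r s) ler_wpM2r // ltW.
  rewrite lerBlDr in h3.
  rewrite -lerBlDl in h3.
  rewrite -/s mulNr (mulrC (ln K)); lra.
Qed.


Section Fin.
Variable T : finType.

Lemma simplex_01 (x : T -> R) : simplex x -> forall t, 0 <= x t <= 1.
Proof.
move=> [x0 x1] t; rewrite x0 /= -x1 (bigD1 t) //=.
by rewrite lerDl sumr_ge0.
Qed.

Lemma negent_phi (x : T -> R) : negent x = \sum_t phi (x t).
Proof. by []. Qed.

Lemma negent_diff (x y : T -> R) (K : R) : simplex x -> simplex y ->
  0 < K -> 1 <= - ln K ->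
  negent y - negent x <= - ln K * norm1 (fun t => y t - x t) + #|T|%:R * K.
Proof.
move=> sx sy K0 LK; rewrite !negent_phi /norm1 -sumrB mulr_sumr.
rewrite mulr_natl -sumr_const -big_split /=.
apply: ler_sum => t _; apply: phi_diff => //; exact: simplex_01.
Qed.

Lemma negent_lb (y : T -> R) : simplex y -> - (#|T|%:R) <= negent y.
Proof.
move=> sy; rewrite negent_phi -sumr_const -sumrN; apply: ler_sum => t _.
apply: phi_ge; by case: sy.
Qed.

Lemma norm1_ge0 (y : T -> R) : 0 <= norm1 y.
Proof. by apply: sumr_ge0 => t _. Qed.

Lemma norminf_ge (c : T -> R) t : `|c t| <= norminf c.
Proof.
rewrite /norminf (bigD1 t) //=; by rewrite le_max lexx.
Qed.

Lemma norminf_ge0 (c : T -> R) : 0 <= norminf c.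
Proof.
rewrite /norminf; elim/big_ind: _ => //.
- by move=> u v u0 v0; rewrite le_max u0.
Qed.

Lemma inner_diff (c x y : T -> R) :
  inner c y - inner c x <= norminf c * norm1 (fun t => y t - x t).
Proof.
rewrite /inner /norm1 -sumrB mulr_sumr; apply: ler_sum => t _.
rewrite -mulrBr; apply: le_trans (ler_norm _) _.
by rewrite normrM ler_wpM2r // norminf_ge.
Qed.

Lemma inner_ge0 (c y : T -> R) : (forall t, 0 <= c t) -> (forall t, 0 <= y t) ->
  0 <= inner c y.
Proof. by move=> c0 y0; apply: sumr_ge0 => t _; rewrite mulr_ge0. Qed.

End Fin.
End Helpers.
Arguments ln_le_sub1 {R x}.
Arguments negent_diff {R T x y K}.
Arguments negent_lb {R T y}.
Arguments norm1_ge0 {R T} y.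
Arguments norminf_ge0 {R T} c.
Arguments inner_diff {R T} c x y.
Arguments inner_ge0 {R T c y}.

Lemma Fobj4 (R : realType) (T : finType) (U : finType) (c : T -> R) mu C (d : U -> R)
  (BTz : U -> R) (z : T -> R) : 0 < C ->
  4 * C * ((4 * C)^-1 * inner c z + mu / (4 * C) * negent z + 4^-1 * norm1 (fun v => BTz v - d v))
  = inner c z + mu * negent z + C * norm1 (fun v => BTz v - d v).
Proof. move=> C0; field; by rewrite ?mulf_neq0 ?gt_eqF. Qed.

Theorem mainTheorem13 (R : realType) (L Rv : finType)
  (c : L * Rv -> R) (mu : R) (dL : L -> R) (dR : Rv -> R) (Delta : R)
  (x xt : L * Rv -> R) :
  (3 <= #|L| * #|Rv|)%N ->
  0 <= mu ->
  (forall e, 0 <= c e) ->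
  simplex dL -> simplex dR ->
  let m := (#|L| * #|Rv|)%N in
  let d := demand dL dR in
  let C := 2 * (norminf c + 33 * mu * ln (m%:R : R)) in
  0 < C ->
  0 <= Delta ->
  simplex x ->
  Fobj c mu C d x <=
    inf [set Fobj c mu C d x' | x' in [set x' : L * Rv -> R | simplex x']]
    + Delta / (4 * C) ->
  simplex xt ->
  BT xt = d ->
  norm1 (fun e => xt e - x e) <= 2 * norm1 (fun v => BT x v - d v) ->
  inner c xt + mu * negent xt <= OPT c mu d + Delta + mu * (m%:R : R) ^- 30.
Proof.
move=> m3 mu0 c0 sdL sdR m d C C0 D0 sx Fx sxt BTxt dxt.
set mR := (m%:R : R).
have mR3 : 3 <= mR by rewrite /mR (ler_nat R 3 m).
have mR0 : 0 < mR by apply: lt_le_trans mR3; rewrite ltr0n.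
have lnm : 2/3 <= ln mR.
  have mi : 0 < mR^-1 by rewrite invr_gt0.
  have := ln_le_sub1 mi; rewrite lnV ?posrE // => h.
  have : mR^-1 <= 3^-1 by rewrite lef_pV2 ?posrE //.
  lra.
set K := (mR ^+ 31)^-1.
have K0 : 0 < K by rewrite invr_gt0 exprn_gt0.
have lnK : - ln K = ln mR *+ 31 by rewrite lnV ?posrE ?exprn_gt0 // opprK lnXn.
have LK : 1 <= - ln K by rewrite lnK; rewrite -mulr_natr; lra.
have cardT : (#|{: L * Rv}|%:R : R) = mR by rewrite card_prod.
have mK : (#|{: L * Rv}|%:R : R) * K = mR ^- 30.
  by rewrite cardT /K exprS invfM mulrA mulfV ?mul1r // gt_eqF.
have hE := negent_diff sx sxt K0 LK.
rewrite mK lnK -mulr_natr in hE.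
have hI := inner_diff c x xt.
set r := norm1 (fun v => BT x v - d v) in Fx dxt *.
set dl := norm1 (fun e => xt e - x e) in dxt hE hI.
have r0 : 0 <= r := norm1_ge0 _.
have dl0 : 0 <= dl := norm1_ge0 _.
have N0 : 0 <= norminf c := norminf_ge0 c.
have lnm0 : 0 <= ln mR by lra.
set P := mR ^- 30 in hE *.
have hlb : has_lbound [set Fobj c mu C d x' | x' in [set x' : L * Rv -> R | simplex x']].
  exists (- (mu / (4 * C) * #|{: L * Rv}|%:R)) => _ [y sy <-].
  rewrite /Fobj.
  have i0 : 0 <= (4 * C)^-1 * inner c y.
    apply: mulr_ge0; first by rewrite invr_ge0 mulr_ge0 // ltW.
    by apply: inner_ge0 => //; case: sy.
  have n0 : 0 <= 4^-1 * norm1 (fun v => BT y v - d v) by rewrite mulr_ge0 ?norm1_ge0.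
  have mc : 0 <= mu / (4 * C) by rewrite divr_ge0 // mulr_ge0 // ltW.
  have := ler_wpM2l mc (negent_lb sy).
  rewrite mulrN. lra.
have key : forall y, simplex y -> BT y = d ->
    inner c xt + mu * negent xt - Delta - mu * P <= inner c y + mu * negent y.
  move=> y sy BTy.
  have Fy : Fobj c mu C d x <= Fobj c mu C d y + Delta / (4 * C).
    apply: le_trans Fx _; rewrite lerD2r; apply: ge_inf => //; by exists y.
  have C4 : 0 < 4 * C by rewrite mulr_gt0.
  have := ler_wpM2l (ltW C4) Fy.
  rewrite [X in _ <= X]mulrDr /Fobj !Fobj4 // -/r.
  have -> : norm1 (fun v => BT y v - d v) = 0.
    by rewrite /norm1 big1 // => v _; rewrite BTy subrr normr0.
  rewrite mulrCA mulfV ?gt_eqF // mulr1 mulr0 addr0 => hF.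
  have hE' := ler_wpM2l mu0 hE.
  have G0 : 0 <= norminf c + ln mR * 31%:R * mu.
    by rewrite addr_ge0 // mulr_ge0 // mulr_ge0.
  have hG := ler_wpM2l G0 dxt.
  have hC : C * r = 2 * (norminf c + 33 * mu * ln mR) * r by [].
  have h33 : (norminf c + ln mR * 31%:R * mu) * (2 * r) <= C * r.
    rewrite hC.
    have : 0 <= mu * ln mR * r by rewrite !mulr_ge0.
    nra.
  rewrite mulrBr mulrDr in hE'.
  rewrite [X in X <= _]mulrDl in hG.
  have e1 : mu * (ln mR * 31%:R * dl) = ln mR * 31%:R * mu * dl by ring.
  rewrite e1 in hE'.
  lra.
have ne : [set inner c x' + mu * negent x' | x' in [set x' : L * Rv -> R | simplex x' /\ BT x' = d]] !=set0.
  by exists (inner c xt + mu * negent xt); exists xt.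
have := lb_le_inf ne (_ : lbound _ (inner c xt + mu * negent xt - Delta - mu * P)).
rewrite /OPT; move=> h.
suff : inner c xt + mu * negent xt - Delta - mu * P <= OPT c mu d by lra.
apply: h => _ [y [sy BTy] <-]; exact: key.
Qed.
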